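(* Let $(X,d)$ be a bounded metric space and let $M: X\to\mathbb{R}$ satisfy $d(x,y)\le M(x)\le d(x,z)+M(z)$ for all $x,y,z\in X$. Let $d_S$ be the subset distance on $\mathcal{F}(X)$ defined in the context. Let $X_1,X_2\in\mathcal{F}(X)$ with $|X_1|\le|X_2|$, and let $X_2'\subseteq X_2$ satisfy $|X_1|\le|X_2'|$. Then $d_S(X_1,X_2')\le d_S(X_1,X_2)$.
   Context: $\mathcal{F}(X)$ denotes the set of all finite subsets of $X$. For $A,B\in\mathcal{F}(X)$ with $|A|\le|B|$ and an injection $\chi:A\to B$, define $d_\chi(A,B)=\sum_{x\in A} d(x,\chi(x))+\sum_{y\in B\setminus\chi(A)} M(y)$. The subset distance is $d_S(A,B)=d_S(B,A)=\min\{d_\chi(A,B) : \chi:A\to B \text{ an injection}\}$ (for $|A|\le|B|$). *)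

(* Defs.v *)
From HB Require Import structures.
From mathcomp Require Import all_boot all_order all_algebra.
From mathcomp Require Import finmap.
Set Implicit Arguments. Unset Strict Implicit. Unset Printing Implicit Defensive.
Import Order.TTheory GRing.Theory Num.Theory.
Local Open Scope ring_scope.


Definition is_metric (R : realFieldType) (X : Type) (d : X -> X -> R) : Prop :=
  (forall x y, 0 <= d x y) /\ (forall x y, d x y = 0 <-> x = y) /\
  (forall x y, d x y = d y x) /\ (forall x y z, d x z <= d x y + d y z).

Definition bounded_metric (R : realFieldType) (X : Type) (d : X -> X -> R) : Prop :=
  exists C : R, forall x y, d x y <= C.

Definition d_chi (R : realFieldType) (X : choiceType) (d : X -> X -> R) (M : X -> R)
  (A B : {fset X}) (chi : {ffun A -> B}) : R :=
  \sum_(a : A) d (val a) (val (chi a)) +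
  \sum_(b : B | b \notin codom chi) M (val b).

(* min over all injections chi : A -> B (meaningful when #|A| <= #|B|,
   where injections exist; otherwise the list is empty and value is 0). *)
Definition dS_ord (R : realFieldType) (X : choiceType) (d : X -> X -> R) (M : X -> R)
  (A B : {fset X}) : R :=
  let vals := [seq d_chi d M f | f <- enum [pred f : {ffun A -> B} | injectiveb f]] in
  foldr Num.min (head 0 vals) vals.

Definition dS (R : realFieldType) (X : choiceType) (d : X -> X -> R) (M : X -> R)
  (A B : {fset X}) : R :=
  if (#|` A| <= #|` B|)%N then dS_ord d M A B else dS_ord d M B A.

(* Main.v *)
Require Import Defs.
From HB Require Import structures.
From mathcomp Require Import all_boot all_order all_algebra.
From mathcomp Require Import finmap lra zify.
Import Order.TTheory GRing.Theory Num.Theory.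
Local Open Scope ring_scope.
Local Open Scope fset_scope.
Set Implicit Arguments. Unset Strict Implicit.

Lemma exists_inj (X : choiceType) (A B : {fset X}) : (#|` A| <= #|` B|)%N ->
  exists f : {ffun A -> B}, injective f.
Proof.
move=> h.
have h' : (#|{: A}| <= #|{: B}|)%N by rewrite -!cardfE.
exists [ffun a : A => enum_val (widen_ord h' (enum_rank a))].
move=> a b; rewrite !ffunE => /enum_val_inj /(congr1 val) /= /val_inj; exact: enum_rank_inj.
Qed.

Lemma sum_incl (R : realFieldType) (X : choiceType) (A B : {fset X}) (P : pred X) (F : X -> R) :
  A `<=` B -> (forall x, 0 <= F x) ->
  \sum_(b <- A | P b) F b <= \sum_(b <- B | P b) F b.
Proof.
move=> AB F0.
pose F' := fun b => if (b \in A) && P b then F b else 0.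
have e1 : \sum_(b <- A | P b) F b = \sum_(b <- A) F' b.
  rewrite big_mkcond; apply: eq_big_seq => b bA; by rewrite /F' bA.
have e2 : \sum_(b <- A) F' b = \sum_(b <- B) F' b.
  by apply: big_fset_incl => // b _ /negbTE bA; rewrite /F' bA.
rewrite e1 e2 [X in _ <= X]big_mkcond; apply: ler_sum => b _.
rewrite /F'; case: (b \in A) => /=; first by case: (P b).
by case: (P b).
Qed.
Lemma foldr_min_le (R : realFieldType) (s : seq R) h v : v \in s -> foldr Num.min h s <= v.
Proof.
elim: s => //= y s IH; rewrite inE => /orP[/eqP->|vs]; first by rewrite ge_min lexx.
by rewrite ge_min (IH vs) orbT.
Qed.

Lemma foldr_min_in (R : realFieldType) (s : seq R) h : foldr Num.min h s \in h :: s.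
Proof.
elim: s => /= [|y s IH]; first by rewrite inE.
rewrite /Num.min; case: ifP => _; first by rewrite !inE eqxx orbT.
move: IH; rewrite !inE => /orP[->|->] //; by rewrite !orbT.
Qed.

Lemma dS_ord_le (R : realFieldType) (X : choiceType) (d : X -> X -> R) (M : X -> R)
  (A B : {fset X}) (f : {ffun A -> B}) : injective f -> dS_ord d M A B <= d_chi d M f.
Proof.
move=> inj; rewrite /dS_ord; apply: foldr_min_le; apply: map_f.
by rewrite mem_enum inE; apply/injectiveP.
Qed.

Lemma dS_ord_attained (R : realFieldType) (X : choiceType) (d : X -> X -> R) (M : X -> R)
  (A B : {fset X}) (f0 : {ffun A -> B}) : injective f0 ->
  exists2 f : {ffun A -> B}, injective f & dS_ord d M A B = d_chi d M f.
Proof.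
move=> inj; rewrite /dS_ord.
set s := enum _.
have hs : f0 \in s by rewrite mem_enum inE; apply/injectiveP.
set vals := map _ s.
have hf : d_chi d M f0 \in vals by apply: map_f.
have := @foldr_min_in _ vals (head 0 vals).
have hh : head 0 vals \in vals by move: hf; case: (vals) => //= a l _; rewrite inE eqxx.
rewrite inE => /orP[/eqP->|]; last first.
  by move=> /mapP[f]; rewrite mem_enum inE => /injectiveP fi ->; exists f.
by move: hh => /mapP[f]; rewrite mem_enum inE => /injectiveP fi ->; exists f.
Qed.
Definition cost (R : realFieldType) (X : choiceType) (d : X -> X -> R) (M : X -> R)
  (A B : {fset X}) (g : X -> X) : R :=
  \sum_(a <- A) d a (g a) + \sum_(b <- B | b \notin [seq g a | a <- A]) M b.

Lemma conv (R : realFieldType) (X : choiceType) (d : X -> X -> R) (M : X -> R)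
  (A B : {fset X}) (f : {ffun A -> B}) (g : X -> X) :
  (forall a : A, val (f a) = g (val a)) -> d_chi d M f = cost d M A B g.
Proof.
move=> hfg; rewrite /d_chi /cost !big_seq_fsetE /=; congr (_ + _)%R.
  by apply: eq_bigr => a _; rewrite hfg.
apply: eq_bigl => b; congr negb; apply/codomP/mapP.
  by move=> [a ->]; exists (val a); [apply: fsvalP | rewrite hfg].
move=> [a aA eb]; exists [` aA]; apply: val_inj; by rewrite hfg.
Qed.

Lemma inj_conv (X : choiceType) (A B : {fset X}) (f : {ffun A -> B}) (g : X -> X) :
  (forall a : A, val (f a) = g (val a)) -> injective f -> {in A &, injective g}.
Proof.
move=> hfg fi x y xA yA gxy.
have : f [` xA] = f [` yA] by apply: val_inj; rewrite !hfg.
by move/fi => [].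
Qed.

Lemma build (X : choiceType) (A B : {fset X}) (g : X -> X) :
  (forall a, a \in A -> g a \in B) -> {in A &, injective g} ->
  exists2 f : {ffun A -> B}, injective f & forall a : A, val (f a) = g (val a).
Proof.
move=> gB gi; exists [ffun a : A => [` gB _ (fsvalP a)]]; last by move=> a; rewrite ffunE.
move=> x y; rewrite !ffunE => /(congr1 val) /= /gi h; apply: val_inj; apply: h; exact: fsvalP.
Qed.
Lemma find_z (X : choiceType) (X1 X2' : {fset X}) (g : X -> X) x :
  (#|` X1| <= #|` X2'|)%N -> {in X1 &, injective g} -> x \in X1 -> g x \notin X2' ->
  exists2 z, z \in X2' & z \notin [seq g a | a <- X1].
Proof.
move=> hc gi xX gx.
case: (boolP (has (fun z => z \notin [seq g a | a <- X1]) X2')).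
  by move=> /hasP[z zX zn]; exists z.
move=> /hasPn hall; exfalso.
have sub : {subset (enum_fset X2') <= [seq g a | a <- rem x (enum_fset X1)]}.
  move=> z zX; have := hall z zX; rewrite negbK => /mapP[a aX za].
  rewrite za; apply: map_f; rewrite (mem_rem_uniq _ (fset_uniq X1)) inE /= aX andbT.
  by apply/eqP => ax; move: gx; rewrite -ax -za zX.
have := uniq_leq_size (fset_uniq X2') sub.
rewrite size_map size_rem //.
move: hc; rewrite (cardfsD1 x X1) xX /=; lia.
Qed.

Lemma reduce (R : realFieldType) (X : choiceType) (d : X -> X -> R) (M : X -> R)
  (X1 X2' : {fset X})
  (dsym : forall x y, d x y = d y x) (d0 : forall x y, 0 <= d x y)
  (dM : forall x y, d x y <= M x) (hc : (#|` X1| <= #|` X2'|)%N) n :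
  forall g : X -> X, {in X1 &, injective g} ->
  (count (fun a => g a \notin X2') X1 <= n)%N ->
  exists g' : X -> X, [/\ {in X1 &, injective g'}, (forall a, a \in X1 -> g' a \in X2')
     & cost d M X1 X2' g' <= cost d M X1 X2' g].
Proof.
elim: n => [|n IH] g gi hn.
  exists g; split => // a aX; move: hn; rewrite leqn0 eqn0Ngt -has_count => /hasPn/(_ a aX).
  by rewrite negbK.
case: (boolP (has (fun a => g a \notin X2') X1)); last first.
  move=> /hasPn h; exists g; split => // a aX; move: (h a aX); by rewrite negbK.
move=> /hasP[x xX gx].
have [z zX zn] := find_z hc gi xX gx.
pose g1 := fun a => if a == x then z else g a.
have g1i : {in X1 &, injective g1}.
  move=> a b aX bX; rewrite /g1; case: eqP => [->|ax]; case: eqP => [->|bx] //.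
  - by move=> zb; move: zn; rewrite zb map_f.
  - by move=> za; move: zn; rewrite -za map_f.
  - exact: gi.
have hrem : forall a, a \in rem x X1 -> a != x /\ a \in X1.
  by move=> a; rewrite (mem_rem_uniq _ (fset_uniq X1)) inE /= => /andP[].
have hn1 : (count (fun a => g1 a \notin X2') X1 <= n)%N.
have /permP cp := perm_to_rem xX.
rewrite cp /= {1}/g1 eqxx zX /= add0n.
move: hn; rewrite cp /= gx add1n ltnS; apply: leq_trans.
apply: eq_leq; apply: eq_in_count => a /hrem[/negbTE ax _].
by rewrite /g1 ax.
have [g' [g'i g'X g'c]] := IH g1 g1i hn1.
  exists g'; split => //; apply: (le_trans g'c).
  rewrite /cost (big_rem x xX) [in X in _ <= X](big_rem x xX) /=.
  rewrite (big_rem z zX) [in X in _ <= X](big_rem z zX) /=.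
  have -> : (z \notin [seq g1 a | a <- X1]) = false.
    by apply/negbTE; rewrite negbK; apply/mapP; exists x => //; rewrite /g1 eqxx.
  rewrite zn /g1 eqxx add0r.
  have -> : \sum_(y <- rem x X1) d y (if y == x then z else g y) = \sum_(y <- rem x X1) d y (g y).
    by rewrite big_seq_cond [RHS]big_seq_cond; apply: eq_bigr => a /andP[/hrem[/negbTE -> _] _].
  have -> : \sum_(y <- rem z X2' | y \notin [seq (if a == x then z else g a) | a <- X1]) M y
         = \sum_(y <- rem z X2' | y \notin [seq g a | a <- X1]) M y.
    rewrite big_seq_cond [RHS]big_seq_cond; apply: eq_bigl => b.
    case bR: (b \in rem z X2') => //=.
    move: bR; rewrite (mem_rem_uniq _ (fset_uniq X2')) inE /= => /andP[bz bX].
    congr negb; apply/mapP/mapP => [[a aX]|[a aX ba]].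
      by case: eqP => [_ bz'|ax ->]; [move: bz; rewrite bz' eqxx | exists a].
    exists a => //; case: eqP => // ax; move: gx; rewrite -ax -ba => gx.
    by rewrite bX in gx.
  have h1 : d x z <= M z by rewrite dsym.
  have h2 := d0 x (g x).
  lra.
Qed.

Local Open Scope ring_scope.

Theorem corollary2p4 (R : realFieldType) (X : choiceType) (d : X -> X -> R) (M : X -> R)
  (hd : is_metric d) (hb : bounded_metric d)
  (hM : forall x y z, d x y <= M x /\ M x <= d x z + M z)
  (X1 X2 X2' : {fset X})
  (h12 : (#|` X1| <= #|` X2|)%N) (hsub : (X2' `<=` X2)%fset) (h12' : (#|` X1| <= #|` X2'|)%N) :
  dS d M X1 X2' <= dS d M X1 X2.
Proof.
have [d0 [_ [dsym _]]] := hd.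
have dM : forall x y, d x y <= M x by move=> x y; case: (hM x y x).
have M0 : forall x, 0 <= M x by move=> x; exact: le_trans (d0 x x) (dM x x).
rewrite /dS h12 h12'.
have [f0 f0i] := exists_inj h12.
have [f fi ->] := dS_ord_attained d M f0i.
pose g := fun x => oapp (fun a => val (f a)) x (insub x).
have hfg : forall a : X1, val (f a) = g (val a) by move=> a; rewrite /g valK.
rewrite (conv d M hfg).
have gi := inj_conv hfg fi.
have [g' [g'i g'X g'c]] := reduce dsym d0 dM h12' gi (leqnn _).
have [f' f'i hf'] := build g'X g'i.
apply: le_trans (dS_ord_le d M f'i) _; rewrite (conv d M hf').
apply: le_trans g'c _.
rewrite /cost lerD2l; exact: sum_incl.
Qed.
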